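(* Let $P$ be a finite nonzero measure on $\mathbb{R}^n$ and let $R \subseteq \mathbb{R}^+ \times \mathbb{R}^n$ be an exponential race with measure $P$. Define, for $x \in \mathbb{R}^n$, \[ G(x) = -\log \min\{T_i : (T_i, x) \in R\}, \] with the convention $\min \emptyset = \infty$ and $-\log \infty = -\infty$. Then $G$ is a Gumbel process with measure $P$.
   Context: A random countable subset $\Pi$ of a Euclidean space is a Poisson process with $\sigma$-finite nonatomic mean measure $\nu$ if (1) for every Borel $B$, $\#(\Pi\cap B) \sim \mathrm{Poisson}(\nu(B))$, and (2) for disjoint Borel $A_1,\ldots,A_m$, the counts $\#(\Pi\cap A_j)$ are independent. Let $\lambda$ be Lebesgue measure on $\mathbb{R}^+=(0,\infty)$. For a finite nonzero measure $P$ on $\mathbb{R}^n$, an exponential race with measure $P$ is a random countable subset $R \subseteq \mathbb{R}^+ \times \mathbb{R}^n$ that is a Poisson process with mean measure $\lambda \times P$, totally ordered by its first coordinate (time). A random variable $G$ is $\mathrm{Gumbel}(m)$ with location $m \in \mathbb{R}$ if $\mathbb{P}(G \le g) = \exp(-\exp(-g+m))$; $\mathrm{Gumbel}(-\infty)$ is the point mass at $-\infty$. A random function $G : \mathbb{R}^n \to \mathbb{R} \cup \{-\infty\}$ is a Gumbel process with measure $P$ if, writing $G^*(B) = \max_{x \in B} G(x)$: (1) for every Borel $B \subseteq \mathbb{R}^n$, the maximum $G^*(B)$ is well defined (attained) and $G^*(B) \sim \mathrm{Gumbel}(\log P(B))$; (2) for disjoint Borel $A_1, \ldots, A_m$, the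 random variables $G^*(A_i)$ are independent. *)

(* Defs.v *)
From HB Require Import structures.
From mathcomp Require Import all_boot all_order all_algebra.
From mathcomp Require Import all_classical all_reals all_analysis.
From mathcomp Require Import finmap measurable_realfun.
Set Implicit Arguments. Unset Strict Implicit. Unset Printing Implicit Defensive.
Import Order.TTheory GRing.Theory Num.Theory.
Import numFieldNormedType.Exports.
Local Open Scope classical_set_scope.
Local Open Scope ring_scope.

(* R^n is modelled as n.-tuple R, equipped by the library with the product
   sigma-algebra of the Borel sigma-algebras of R (= Borel sets of R^n). *)

Definition npoints (T : choiceType) (R : realType) (A : set T) : \bar R :=
  if pselect (finite_set A) then ((#|` fset_set A|%fset)%:R)%:E else +oo%E.

(* Poisson(mu) pmf, mu >= 0 (with 0^0 = 1, so Poisson(0) = point mass at 0) *)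
Definition poisson_pmf' (R : realType) (mu : R) (k : nat) : R :=
  mu ^+ k / (k`!)%:R * expR (- mu).

Definition poisson_law (R : realType) d (Om : measurableType d)
    (Pr : probability Om R) (mu : \bar R) (X : Om -> \bar R) : Prop :=
  match mu with
  | EFin r => forall k : nat, Pr [set w | X w = (k%:R)%:E] = (poisson_pmf' r k)%:E
  | +oo%E => Pr [set w | X w = +oo%E] = 1%E
  | -oo%E => False
  end.

Definition mutually_independent (R : realType) d (Om : measurableType d)
    (Pr : probability Om R) (m : nat) (X : 'I_m -> Om -> \bar R) : Prop :=
  (forall i, measurable_fun setT (X i)) /\
  forall E : 'I_m -> set (\bar R), (forall i, measurable (E i)) ->
    Pr (\bigcap_(i in [set: 'I_m]) (X i @^-1` E i)) =
    (\prod_(i < m) Pr (X i @^-1` E i))%E.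

Definition pos_region (R : realType) (n : nat) : set (R * n.-tuple R) :=
  `]0, +oo[%classic `*` [set: n.-tuple R].

(* Pi is an exponential race with measure P: a Poisson process on
   R^+ x R^n with mean measure (Lebesgue on R^+) x P *)
Definition exponential_race (R : realType) d (Om : measurableType d)
    (Pr : probability Om R) (n : nat)
    (P : {finite_measure set (n.-tuple R) -> \bar R})
    (Pi : Om -> set (R * n.-tuple R)) : Prop :=
  (forall w, countable (Pi w)) /\
  (forall w, Pi w `<=` @pos_region R n) /\
  (forall B : set (R * n.-tuple R), measurable B -> B `<=` @pos_region R n ->
     measurable_fun setT (fun w => @npoints _ R (Pi w `&` B)) /\
     poisson_law Pr ((@lebesgue_measure R \x P)%E B)
                    (fun w => @npoints _ R (Pi w `&` B))) /\
  (forall (m : nat) (A : 'I_m -> set (R * n.-tuple R)),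
     (forall i, measurable (A i)) -> (forall i, A i `<=` @pos_region R n) ->
     (forall i j, i != j -> A i `&` A j = set0) ->
     mutually_independent Pr (fun i w => @npoints _ R (Pi w `&` A i))).

Definition neglog (R : realType) (v : \bar R) : \bar R :=
  match v with
  | EFin r => if r <= 0 then +oo%E else (- ln r)%:E
  | +oo%E => -oo%E
  | -oo%E => +oo%E
  end.

(* G(x) = -log min { T : (T, x) in Pi } (min taken as infimum; inf of empty = +oo) *)
Definition race_G (R : realType) d (Om : measurableType d) (n : nat)
    (Pi : Om -> set (R * n.-tuple R)) (w : Om) (x : n.-tuple R) : \bar R :=
  neglog (ereal_inf [set t%:E | t in [set t : R | Pi w (t, x)]]).

Definition Gstar (R : realType) d (Om : measurableType d) (n : nat)
    (G : Om -> n.-tuple R -> \bar R) (B : set (n.-tuple R)) (w : Om) : \bar R :=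
  ereal_sup (G w @` B).

(* Gumbel(m) cdf, m in R \cup {-oo}; Gumbel(-oo) = point mass at -oo *)
Definition gumbel_cdf (R : realType) (m : \bar R) (g : R) : R :=
  match m with
  | EFin r => expR (- expR (- g + r))
  | -oo%E => 1
  | +oo%E => 0
  end.

Definition gumbel_law (R : realType) d (Om : measurableType d)
    (Pr : probability Om R) (m : \bar R) (X : Om -> \bar R) : Prop :=
  forall g : R, Pr [set w | (X w <= g%:E)%E] = (gumbel_cdf m g)%:E.

Definition logmeas (R : realType) (T : Type) (mu : set T -> \bar R) (B : set T)
  : \bar R :=
  if (0 < mu B)%E then (ln (fine (mu B)))%:E else -oo%E.

Definition gumbel_process (R : realType) d (Om : measurableType d)
    (Pr : probability Om R) (n : nat)
    (P : {finite_measure set (n.-tuple R) -> \bar R})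
    (G : Om -> n.-tuple R -> \bar R) : Prop :=
  (forall B : set (n.-tuple R), measurable B ->
     measurable_fun setT (Gstar G B) /\
     {ae Pr, forall w, B = set0 \/ exists2 x, B x & G w x = Gstar G B w} /\
     gumbel_law Pr (logmeas P B) (Gstar G B)) /\
  (forall (m : nat) (A : 'I_m -> set (n.-tuple R)),
     (forall i, measurable (A i)) ->
     (forall i j, i != j -> A i `&` A j = set0) ->
     mutually_independent Pr (fun i => Gstar G (A i))).

(* Main.v *)
Require Import Defs.
From HB Require Import structures.
From mathcomp Require Import all_boot all_order all_algebra.
From mathcomp Require Import all_classical all_reals all_analysis.
From mathcomp Require Import finmap measurable_realfun.
Import Order.TTheory GRing.Theory Num.Theory.
Import numFieldNormedType.Exports.
Local Open Scope classical_set_scope.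
Local Open Scope ring_scope.
Lemma npoints0 (T : choiceType) (R : realType) (A : set T) :
  @npoints T R A = 0%E <-> A = set0.
Proof.
rewrite /npoints; case: pselect => [fA|nfA]; split => //.
- move=> [] /eqP; rewrite pnatr_eq0 cardfs_eq0 => /eqP; exact: fset_set_set0.
- by move=> A0; move: fA; rewrite A0 => fA; rewrite fset_set0 cardfs0.
- by move=> A0; exfalso; apply: nfA; rewrite A0.
Qed.

Lemma neglog_le (R : realType) (v : \bar R) (g : R) : (0 <= v)%E ->
  (neglog v <= g%:E)%E <-> ((expR (- g))%:E <= v)%E.
Proof.
case: v => [r| |] //= r0; last by split => _; rewrite ?leNye ?leey.
rewrite lee_fin in r0; case: ifPn => [r0'|].
  have -> : r = 0 by apply/eqP; rewrite eq_le r0' r0.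
  by split => //; rewrite lee_fin leNgt expR_gt0.
rewrite -ltNge => rpos; rewrite !lee_fin.
have rP : r \in Num.pos by rewrite posrE.
by rewrite -{2}(lnK rP) ler_expR lerNl.
Qed.

Definition rect {R : realType} {n : nat} (c : R) (B : set (n.-tuple R)) :
  set (R * n.-tuple R) := `]0, c[%classic `*` B.

Lemma pos_t {R : realType} {n : nat} (S : set (R * n.-tuple R)) t x :
  S `<=` @pos_region R n -> S (t, x) -> 0 < t.
Proof. by move=> SP /SP [/=]; rewrite in_itv /= andbT. Qed.

Lemma inf_ge0 (R : realType) d (Om : measurableType d) n
  (Pi : Om -> set (R * n.-tuple R)) w x : Pi w `<=` @pos_region R n ->
  (0 <= ereal_inf [set t%:E | t in [set t : R | Pi w (t, x)]])%E.
Proof.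
move=> hP; apply/ereal_infP => _ [t Ptx <-]; rewrite lee_fin ltW //.
exact: pos_t Ptx.
Qed.

Lemma Gstar_le (R : realType) d (Om : measurableType d) n
  (Pi : Om -> set (R * n.-tuple R)) w B g : Pi w `<=` @pos_region R n ->
  (Gstar (race_G Pi) B w <= g%:E)%E <-> Pi w `&` rect (expR (- g)) B = set0.
Proof.
move=> hP; rewrite /Gstar; split.
- move/ereal_supP => h; apply/seteqP; split => // -[t x] [Ptx [/= tI Bx]].
  have := h (race_G Pi w x) (ex_intro2 _ _ x Bx erefl).
  rewrite /race_G neglog_le; last exact: inf_ge0.
  move/ereal_infP => /(_ t%:E (ex_intro2 _ _ t Ptx erefl)).
  by rewrite lee_fin leNgt; move: tI; rewrite in_itv /= => /andP[_ ->].
- move=> h; apply/ereal_supP => _ [x Bx <-].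
  rewrite /race_G neglog_le; last exact: inf_ge0.
  apply/ereal_infP => _ [t Ptx <-]; rewrite lee_fin leNgt; apply/negP => tc.
  have : (Pi w `&` rect (expR (- g)) B) (t, x).
    split => //; split => //=; rewrite in_itv /= tc andbT.
    exact: pos_t Ptx.
  by rewrite h.
Qed.

Lemma attain (R : realType) d (Om : measurableType d) n
  (Pi : Om -> set (R * n.-tuple R)) w B :
  Pi w `<=` @pos_region R n ->
  (forall k : nat, finite_set (Pi w `&` rect k.+1%:R B)) ->
  B = set0 \/ exists2 x, B x & race_G Pi w x = Gstar (race_G Pi) B w.
Proof.
move=> hP hfin.
have [[t0 [x0 [P0 B0]]]|nopt] := pselect (exists t x, Pi w (t, x) /\ B x); last first.
  have [->|/set0P [x Bx]] := eqVneq B set0; first by left.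
  right.
  have allNy y : B y -> race_G Pi w y = -oo%E.
    move=> By; rewrite /race_G.
    rewrite (_ : [set t%:E | t in [set t : R | Pi w (t, y)]] = set0) ?ereal_inf0 //.
    apply/seteqP; split => // z [t Pt _]; by exfalso; apply: nopt; exists t, y; split.
  apply: (ex_intro2 _ _ x Bx); rewrite allNy //; apply/esym/eqP; rewrite eq_le leNye andbT.
  by apply/ereal_supP => _ [y By <-]; rewrite allNy.
right.
have t0pos : 0 < t0 := @pos_t _ _ (Pi w) _ _ hP P0.
set k := Num.truncn t0.
set S := Pi w `&` rect k.+1%:R B.
have fS := hfin k.
have S0 : S (t0, x0).
  by split => //; split => //=; rewrite in_itv /= t0pos truncnS_gt.
set tm := \big[Order.min/t0]_(p <- fset_set S) p.1.
have tm_le p : S p -> tm <= p.1.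
  move=> Sp; apply: (@ge_bigmin_seq _ _ _ _ _ p) => //.
  by rewrite in_fset_set //; apply/mem_set.
have [p [Sp ep]] : exists p, S p /\ tm = p.1.
  have : tm = t0 \/ exists p, S p /\ tm = p.1.
    rewrite /tm big_seq; apply: (big_ind (fun v => v = t0 \/ exists p, S p /\ v = p.1)).
    - by left.
    - by move=> a b ha hb; rewrite /Order.min; case: ifP => _.
    - by move=> p; rewrite in_fset_set // => /set_mem Sp; right; exists p.
  by case => [->|//]; exists (t0, x0).
move: p Sp ep => [tp xp] [Ptp [/= _ Bxp]] /= ep.
have tppos : 0 < tp := @pos_t _ _ (Pi w) _ _ hP Ptp.
have inf_ge y : B y ->
    (tp%:E <= ereal_inf [set t%:E | t in [set t : R | Pi w (t, y)]])%E.
  move=> By; apply/ereal_infP => _ [t Pt <-]; rewrite lee_fin.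
  have [tk|kt] := ltP t k.+1%:R.
  - rewrite -ep; apply: (tm_le (t, y)); split => //; split => //=.
    by rewrite in_itv /= tk andbT; exact: pos_t Pt.
  - rewrite -ep (le_trans (tm_le _ S0)) //= (le_trans (ltW (truncnS_gt t0))) //.
have inf_p : ereal_inf [set t%:E | t in [set t : R | Pi w (t, xp)]] = tp%:E.
  apply/eqP; rewrite eq_le inf_ge // andbT; apply: ereal_inf_lbound.
  by exists tp.
exists xp => //.
have Gp : race_G Pi w xp = (- ln tp)%:E by rewrite /race_G inf_p /= leNgt tppos.
apply/eqP; rewrite eq_le; apply/andP; split.
- by apply: ereal_sup_ubound; exists xp.
- apply/ereal_supP => _ [y By <-]; rewrite Gp /race_G neglog_le; last exact: inf_ge0.
  by rewrite opprK lnK ?posrE //; exact: inf_ge.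
Qed.
Definition Grays (R : realType) : set (set \bar R) :=
  [set A | A = setT \/ exists r : R, A = `]-oo, r%:E]%classic].

Lemma measurable_Grays (R : realType) : @measurable _ (\bar R) = <<s Grays R >>.
Proof.
apply/seteqP; split => A mA.
- have mA' : (@ErealGenInftyO.G R).-sigma.-measurable A.
    by rewrite -(@ErealGenInftyO.measurableE R).
  apply: (smallest_sub _ _ mA'); first exact: smallest_sigma_algebra.
  move=> _ [r ->].
  have -> : `]-oo, r%:E[%classic =
      \bigcup_k `]-oo, (r - k.+1%:R^-1)%:E]%classic :> set (\bar R).
    apply/seteqP; split => x /=; rewrite in_itv /=.
    + case: x => [s| |] //; last first.
        by move=> _; exists 0%N => //=; rewrite in_itv /= leNye.
      rewrite lte_fin => /ltr_add_invr [k hk]; exists k => //=.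
      by rewrite in_itv /= lee_fin lerBrDr ltW.
    + move=> [k _] /=; rewrite in_itv /= => h; apply: (le_lt_trans h).
      by rewrite lte_fin ltrBlDr ltrDl invr_gt0.
  apply: sigma_algebra_bigcup => k; apply: sub_sigma_algebra.
  by right; exists (r - k.+1%:R^-1).
- apply: (smallest_sub _ _ mA); first exact: sigma_algebra_measurable.
  by move=> _ [->|[r ->]] //; exact: emeasurable_itv.
Qed.

Lemma Grays_setI (R : realType) : setI_closed (Grays R).
Proof.
move=> _ _ [->|[r ->]] [->|[s ->]]; rewrite ?setTI ?setIT; try by left.
- by right; exists s.
- by right; exists r.
right; have [rs|sr] := leP r s.
  exists r; apply/seteqP; split => x /=; rewrite !in_itv /=.
    by case.
  by move=> xr; split => //; rewrite (le_trans xr) // lee_fin.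
exists s; apply/seteqP; split => x /=; rewrite !in_itv /=.
  by case.
by move=> xs; split => //; rewrite (le_trans xs) // lee_fin ltW.
Qed.

Lemma dynkin_step (R : realType) d (Om : measurableType d) (Pr : probability Om R)
  (Y : Om -> \bar R) (A : set Om) : measurable_fun setT Y -> measurable A ->
  (forall S, Grays R S -> Pr (Y @^-1` S `&` A) = (Pr (Y @^-1` S) * Pr A)%E) ->
  forall S, measurable S -> Pr (Y @^-1` S `&` A) = (Pr (Y @^-1` S) * Pr A)%E.
Proof.
move=> mY mA hG S mS.
have mYS B : measurable B -> measurable (Y @^-1` B).
  by move=> mB; rewrite -[X in measurable X]setTI; exact: mY.
have finP B : measurable B -> (Pr B \is a fin_num)%E.
  by move=> mB; exact: fin_num_measure.
pose Q := [set S | Pr (Y @^-1` S `&` A) = (Pr (Y @^-1` S) * Pr A)%E].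
suff : Q S by [].
apply: (@dynkin_induction _ _ (Grays R) Q (measurable_Grays R) (@Grays_setI R)).
- rewrite /Q /= (_ : Y @^-1` _ = setT); last by apply/seteqP.
  by rewrite setTI probability_setT mul1e.
- exact: hG.
- move=> B mB; rewrite /Q /= => hB.
  have e1 : Pr (A `\` Y @^-1` B) = (Pr A - Pr (A `&` Y @^-1` B))%E.
    by apply: measureD => //; [exact: mYS | rewrite ltey_eq finP].
  have e2 : Pr (~` (Y @^-1` B)) = (1 - Pr (Y @^-1` B))%E.
    by apply: probability_setC; exact: mYS.
  rewrite -preimage_setC setIC -setDE e1 e2 (setIC A) hB.
  rewrite -(fineK (finP _ (mYS _ mB))) -(fineK (finP _ mA)).
  by rewrite -!EFinM -EFinB mulrBl mul1r.
- move=> F mF tF; rewrite /Q /= => hF.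
  have tF' : trivIset setT (fun k => Y @^-1` F k `&` A).
    apply/trivIsetP => i j _ _ ij.
    move/trivIsetP : tF => /(_ i j Logic.I Logic.I ij) FF.
    apply/seteqP; split => // w [[Fi _] [Fj _]].
    by move: (conj Fi Fj : (F i `&` F j) (Y w)); rewrite FF.
  have tF'' : trivIset setT (fun k => Y @^-1` F k).
    apply/trivIsetP => i j _ _ ij.
    move/trivIsetP : tF => /(_ i j Logic.I Logic.I ij) FF.
    apply/seteqP; split => // w [Fi Fj].
    by move: (conj Fi Fj : (F i `&` F j) (Y w)); rewrite FF.
  rewrite preimage_bigcup setI_bigcupl measure_bigcup //; last first.
    by move=> k _; apply: measurableI => //; exact: mYS.
  rewrite measure_bigcup //; last by move=> k _; exact: mYS.
  transitivity (\sum_(i <oo | i \in setT) ((fine (Pr A))%:E * Pr (Y @^-1` F i)))%E.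
    apply: eq_eseriesr => k _; rewrite (fineK (finP _ mA)) muleC; exact: hF.
  rewrite nneseriesZl; last by move=> k _; exact: measure_ge0.
  by rewrite muleC fineK //; exact: finP.
- by rewrite -measurable_Grays.
Qed.

Lemma indep_extend (R : realType) d (Om : measurableType d) (Pr : probability Om R)
  m (X : 'I_m -> Om -> \bar R) :
  (forall i, measurable_fun setT (X i)) ->
  (forall E : 'I_m -> set \bar R, (forall i, Grays R (E i)) ->
     Pr (\bigcap_(i in [set: 'I_m]) (X i @^-1` E i)) =
     (\prod_(i < m) Pr (X i @^-1` E i))%E) ->
  mutually_independent Pr X.
Proof.
move=> mX hb; split => // E mE.
have mXS i B : measurable B -> measurable (X i @^-1` B).
  by move=> mB; rewrite -[X in measurable X]setTI; exact: mX.
suff H : forall j, (j <= m)%N -> forall E : 'I_m -> set \bar R,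
   (forall i : 'I_m, (i < j)%N -> measurable (E i)) ->
   (forall i : 'I_m, (j <= i)%N -> Grays R (E i)) ->
   Pr (\bigcap_(i in [set: 'I_m]) (X i @^-1` E i)) =
   (\prod_(i < m) Pr (X i @^-1` E i))%E.
  by apply: (H m) => // i; rewrite leqNgt ltn_ord.
elim => [_ E0 _ hG | j IH jm E0 hm hG].
  by apply: hb => i; apply: hG.
pose ij : 'I_m := Ordinal jm.
pose A := \bigcap_(i in [set: 'I_m] `\ ij) (X i @^-1` E0 i).
have split1 (E' : 'I_m -> set \bar R) :
    Pr (\bigcap_(i in [set: 'I_m]) (X i @^-1` E' i)) =
    Pr (X ij @^-1` E' ij `&` \bigcap_(i in [set: 'I_m] `\ ij) (X i @^-1` E' i)).
  by rewrite (bigcap_setD1 ij).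
have split2 (E' : 'I_m -> set \bar R) : (\prod_(i < m) Pr (X i @^-1` E' i) =
    Pr (X ij @^-1` E' ij) * \prod_(i < m | i != ij) Pr (X i @^-1` E' i))%E.
  by rewrite (bigD1 ij).
pose E' S := fun i => if i == ij then S else E0 i.
have hIH S : Grays R S -> Pr (X ij @^-1` S `&` A) =
    (Pr (X ij @^-1` S) * \prod_(i < m | i != ij) Pr (X i @^-1` E0 i))%E.
  move=> GS.
  have h1 : forall i : 'I_m, (i < j)%N -> measurable (E' S i).
    move=> i ij'; rewrite /E'; case: eqP => [eij|_].
      by move: ij'; rewrite eij /= ltnn.
    by apply: hm; exact: ltnW.
  have h2 : forall i : 'I_m, (j <= i)%N -> Grays R (E' S i).
    move=> i ji; rewrite /E'; case: eqP => [//|nij]; apply: hG.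
    rewrite ltn_neqAle ji andbT; apply/eqP => eji; apply: nij.
    by apply: val_inj; rewrite /= eji.
  have h := IH (ltnW jm) (E' S) h1 h2.
  rewrite split1 split2 /E' eqxx in h.
  have eA : \bigcap_(i in [set: 'I_m] `\ ij)
      (X i @^-1` (if i == ij then S else E0 i)) = A.
    by apply: eq_bigcapr => i [_ /eqP /negbTE ->].
  have eP : (\prod_(i < m | i != ij)
      Pr (X i @^-1` (if i == ij then S else E0 i)) =
      \prod_(i < m | i != ij) Pr (X i @^-1` E0 i))%E.
    by apply: eq_bigr => i /negbTE ->.
  by rewrite eA eP in h.
have mA : measurable A.
  apply: fin_bigcap_measurable; first exact: finite_finset.
  move=> i [_ nij]; apply: mXS; case: (ltnP i j.+1) => [/hm //|/hG GE].
  by rewrite measurable_Grays; exact: sub_sigma_algebra.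
have hPA : Pr A = (\prod_(i < m | i != ij) Pr (X i @^-1` E0 i))%E.
  have := hIH setT (or_introl erefl).
  rewrite (_ : X ij @^-1` _ = setT); last by apply/seteqP.
  by rewrite setTI probability_setT mul1e.
have hD := @dynkin_step R d Om Pr (X ij) A (mX ij) mA.
rewrite split1 split2 -/A -hPA; apply: hD; last by apply: hm => /=.
by move=> S GS; rewrite hIH // hPA.
Qed.

Lemma prodrect (R : realType) (n : nat)
    (P : {finite_measure set (n.-tuple R) -> \bar R}) (c : R) (B : set (n.-tuple R)) :
  0 <= c -> measurable B ->
  ((@lebesgue_measure R \x P) (@rect R n c B) = c%:E * P B)%E.
Proof.
move=> c0 mB; rewrite product_measure1E //.
have := @lebesgue_measure_itv R `]0, c[; rewrite /= lte_fin => ->.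
by case: ltgtP c0 => // [c0 _|<- _]; rewrite ?sube0 ?mul0e.
Qed.

Section race.
Context (R : realType) (d : measure_display) (Om : measurableType d)
  (Pr : probability Om R) (n : nat)
  (P : {finite_measure set (n.-tuple R) -> \bar R})
  (Pi : Om -> set (R * n.-tuple R)).
Hypothesis hr : exponential_race Pr P Pi.

Let hpos w : Pi w `<=` @pos_region R n := hr.2.1 w.
Let N (S : set (R * n.-tuple R)) w := @npoints _ R (Pi w `&` S).

Lemma rect_meas c {B} : measurable B -> measurable (@rect R n c B).
Proof. by move=> mB; apply: measurableX => //; exact: measurable_itv. Qed.

Lemma rect_pos c B : @rect R n c B `<=` @pos_region R n.
Proof.
move=> [t x] [/= tI _]; split => //=; move: tI; rewrite !in_itv /= andbT.
by case/andP.
Qed.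

Lemma N_meas c {B} : measurable B -> measurable_fun setT (N (@rect R n c B)).
Proof. by move=> mB; exact: (hr.2.2.1 _ (rect_meas c mB) (@rect_pos c B)).1. Qed.

Lemma N_law c B : measurable B ->
  poisson_law Pr ((@lebesgue_measure R \x P)%E (@rect R n c B)) (N (rect c B)).
Proof. by move=> mB; exact: (hr.2.2.1 _ (rect_meas c mB) (@rect_pos c B)).2. Qed.

Lemma Gle_set B g : [set w | (Gstar (race_G Pi) B w <= g%:E)%E] =
  [set w | N (@rect R n (expR (- g)) B) w = 0%E].
Proof.
apply/seteqP; split => w /=.
- by move/(@Gstar_le _ _ _ _ Pi w B g (hpos w)) => h; apply/npoints0.
- by move/npoints0 => h; apply/(@Gstar_le _ _ _ _ Pi w B g (hpos w)).
Qed.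

Lemma meas_N0 c B : measurable B -> measurable [set w | N (@rect R n c B) w = 0%E].
Proof.
move=> mB; rewrite -[X in measurable X]setTI.
exact: (N_meas c mB measurableT _ (emeasurable_set1 0%E)).
Qed.

Lemma meas_Gstar B : measurable B -> measurable_fun setT (Gstar (race_G Pi) B).
Proof.
move=> mB; apply: (@measurability _ _ _ _ setT _ (Grays R)); first exact: measurable_Grays.
move=> _ [A [->|[r ->]] <-].
  by rewrite (_ : _ @^-1` _ = setT) ?setTI //; apply/seteqP.
rewrite (_ : _ `&` _ = [set w | (Gstar (race_G Pi) B w <= r%:E)%E]); last first.
  by apply/seteqP; split => w /=; rewrite in_itv /= => -[].
by rewrite Gle_set; exact: meas_N0.
Qed.

Lemma Pr_N0 c B : 0 <= c -> measurable B ->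
  Pr [set w | N (@rect R n c B) w = 0%E] = (expR (- (c * fine (P B))))%:E.
Proof.
move=> c0 mB; have := N_law c B mB; rewrite prodrect //.
have fPB : (P B \is a fin_num)%E := fin_num_measure P B mB.
rewrite -(fineK fPB) -EFinM /= => /(_ 0%N).
rewrite mulr0n /poisson_pmf' expr0 fact0 divr1 mul1r.
by [].
Qed.

Lemma Glaw B : measurable B -> gumbel_law Pr (logmeas P B) (Gstar (race_G Pi) B).
Proof.
move=> mB g; rewrite Gle_set Pr_N0 ?expR_ge0 //.
have fPB : (P B \is a fin_num)%E := fin_num_measure P B mB.
rewrite /gumbel_cdf /logmeas; case: ifPn => [PB0|].
- have fpos : 0 < fine (P B) by rewrite -lte_fin fineK.
  by rewrite expRD lnK ?posrE // mulrC.
- rewrite -leNgt => PB0.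
  have -> : P B = 0%E by apply/le_anti; rewrite PB0 measure_ge0.
  by rewrite /= mulr0 oppr0 expR0.
Qed.

Lemma N_vals S w : N S w = +oo%E \/ exists k : nat, N S w = (k%:R)%:E.
Proof. by rewrite /N /npoints; case: pselect => [fS|nfS]; [right; eexists|left]. Qed.

Lemma N_inf_null c B : 0 <= c -> measurable B ->
  Pr [set w | N (@rect R n c B) w = +oo%E] = 0%E.
Proof.
move=> c0 mB.
set X := N (rect c B).
have fPB : (P B \is a fin_num)%E := fin_num_measure P B mB.
set r := c * fine (P B).
have r0 : 0 <= r by rewrite mulr_ge0 // fine_ge0 // measure_ge0.
have hlaw : forall k, Pr [set w | X w = (k%:R)%:E] = (poisson_pmf' r k)%:E.
  by have := N_law c B mB; rewrite prodrect // -(fineK fPB) -EFinM.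
have mXk (v : \bar R) : measurable [set w | X w = v].
  rewrite -[X in measurable X]setTI.
  exact: (N_meas c mB measurableT _ (emeasurable_set1 v)).
suff [V [mV PV1 sub]] : exists V, [/\ measurable V, Pr V = 1%E &
    [set w | X w = +oo%E] `<=` ~` V].
  apply: (subset_measure0 (mXk _) (measurableC mV) sub).
  transitivity (Pr (~` V)); first by [].
  have e : Pr (~` V) = (1 - Pr V)%E by apply: probability_setC.
  by rewrite e PV1 subee.
have [r0'|rpos] := eqVneq r 0.
  exists [set w | X w = 0%E]; split => //.
    have := hlaw 0%N; rewrite r0' /poisson_pmf' expr0 fact0 divr1 mul1r oppr0 expR0.
    by [].
  by move=> w /= ->.
exists (\bigcup_k [set w | X w = (k%:R)%:E]); split.
- by apply: bigcupT_measurable => k; exact: mXk.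
- rewrite measure_bigcup //; last first.
    apply/trivIsetP => i j _ _ ij; apply/seteqP; split => // w [/= -> ].
    by move=> [] /eqP; rewrite eqr_nat (negbTE ij).
  have rgt : 0 < r by rewrite lt_def rpos r0.
  transitivity (\sum_(i <oo | i \in [set: nat]) (poisson_pmf r i)%:E)%E.
    apply: eq_eseriesr => k _; rewrite /poisson_pmf rgt.
    by have := hlaw k.
  rewrite nneseries_esum; last by move=> k _; rewrite lee_fin poisson_pmf_ge0.
  have := probability_setT (poisson_prob r 0%N).
  rewrite /poisson_prob rgt => <-.
  rewrite /= (_ : [set` [set: nat]] = setT) //.
  - by rewrite /poisson_prob rgt.
  - by apply/seteqP; split => x //= _; rewrite in_setT.
- by move=> w /= hw [k _ /=]; rewrite hw.
Qed.

Lemma Gae B : measurable B ->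
  {ae Pr, forall w, B = set0 \/ exists2 x, B x & race_G Pi w x = Gstar (race_G Pi) B w}.
Proof.
move=> mB.
have h : \forall w \ae Pr, forall k : nat, finite_set (Pi w `&` rect k.+1%:R B).
  apply: ae_foralln => k.
  exists [set w | N (rect k.+1%:R B) w = +oo%E]; split.
  - rewrite -[X in measurable X]setTI.
    exact: (N_meas _ mB measurableT _ (emeasurable_set1 _)).
  - exact: N_inf_null.
  - by move=> w /= nf; rewrite /N /npoints; case: pselect.
apply: filterS h => w hw; exact: attain (hpos w) hw.
Qed.

Lemma Gindep m (A : 'I_m -> set (n.-tuple R)) : (forall i, measurable (A i)) ->
  (forall i j, i != j -> A i `&` A j = set0) ->
  mutually_independent Pr (fun i => Gstar (race_G Pi) (A i)).
Proof.
move=> mA dA; apply: indep_extend; first by move=> i; exact: meas_Gstar.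
move=> E GE.
have : forall i, exists cF : R * set \bar R, [/\ 0 <= cF.1, measurable cF.2 &
    Gstar (race_G Pi) (A i) @^-1` E i = N (rect cF.1 (A i)) @^-1` cF.2].
  move=> i; case: (GE i) => [->|[r ->]].
  - by exists (1, setT); split => //=; apply/seteqP.
  - exists (expR (- r), [set 0%E]); split; [exact: expR_ge0|exact: emeasurable_set1|].
    transitivity [set w | (Gstar (race_G Pi) (A i) w <= r%:E)%E].
      by apply/seteqP; split => w /=; rewrite in_itv /=.
    by rewrite Gle_set.
move/choice => [cF hcF].
have mR i : measurable (@rect R n (cF i).1 (A i)) := rect_meas _ (mA i).
have dR : forall i j, i != j ->
    @rect R n (cF i).1 (A i) `&` @rect R n (cF j).1 (A j) = set0.
  move=> i j ij; apply/seteqP; split => // -[t x] [[_ /= Ai] [_ /= Aj]].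
  by move: (conj Ai Aj : (A i `&` A j) x); rewrite dA.
have hcount := hr.2.2.2 m (fun i => rect (cF i).1 (A i)) mR
  (fun i => @rect_pos _ _) dR.
transitivity (Pr (\bigcap_(i in [set: 'I_m]) (N (rect (cF i).1 (A i)) @^-1` (cF i).2))).
  by congr (Pr _); apply: eq_bigcapr => i _; case: (hcF i).
transitivity (\prod_(i < m) Pr (N (rect (cF i).1 (A i)) @^-1` (cF i).2))%E.
  by apply: hcount.2 => i; case: (hcF i).
by apply: eq_bigr => i _; case: (hcF i) => _ _ ->.
Qed.

End race.

Theorem theorem5 (R : realType) (d : measure_display) (Om : measurableType d)
    (Pr : probability Om R) (n : nat)
    (P : {finite_measure set (n.-tuple R) -> \bar R})
    (Pi : Om -> set (R * n.-tuple R)) :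
  (0 < P setT)%E ->
  exponential_race Pr P Pi ->
  gumbel_process Pr P (race_G Pi).
Proof.
move=> _ hr; split.
- move=> B mB; split; first by eapply meas_Gstar; eauto.
  split; first by eapply Gae; eauto.
  by eapply Glaw; eauto.
- by move=> m A mA dA; eapply Gindep; eauto.
Qed.
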